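(* Let $L,R$ be nonempty subsets of a group $G$ and $s\in G$, and consider $2\mathrm{S}(G;L,R)$. (1) There exist words $w_{L,m}$ and $w_{L,n}$ in $L$ with $m\neq n$ such that $w_{L,m}s\sim w_{L,n}s$ if and only if there exists a word $w_{L,k}$ in $L$ of positive length with $w_{L,k}s\sim s$; moreover one can take $k=|m-n|$. (2) For $n\ge1$, there exists a word $w_{L,n}$ in $L$ with $w_{L,n}s\sim s$ if and only if there exists a word $w_{L^{-1},n}$ in $L^{-1}$ with $w_{L^{-1},n}s\sim s$. (3) If $g\in\langle L\rangle s\langle R\rangle$ and $k\ge 1$, then $w_{L,k}g\sim g$ for some word $w_{L,k}$ in $L$ of length $k$ if and only if $w'_{L,k}s\sim s$ for some word $w'_{L,k}$ in $L$ of length $k$.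
   Context: For nonempty subsets $L,R$ of a group $G$, the two-sided group digraph $2\mathrm{S}(G;L,R)$ has vertex set $G$ and a directed arc $(g,h)$ if and only if $h=l^{-1}gr$ for some $l\in L$, $r\in R$. $w_{S,n}$ denotes the value of a word $s_1\cdots s_n$ with $s_i\in S$. $g\sim h$ means $g$ is weakly connected to $h$: there is a sequence $g=g_0,\dots,g_n=h$ with, for each $i$, $(g_{i-1},g_i)$ or $(g_i,g_{i-1})$ an arc. $\langle S\rangle$ is the subgroup generated by $S$. *)

(* Defs.v *)
From HB Require Import structures.
From mathcomp Require Import all_boot.
From Stdlib Require Import Relations.
Set Implicit Arguments. Unset Strict Implicit. Unset Printing Implicit Defensive.
Local Open Scope group_scope.

Section TwoSided.
Variable G : groupType.

Definition is_word (S : G -> Prop) (n : nat) (g : G) : Prop :=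
  exists w : seq G, size w = n /\ (forall x, x \in w -> S x) /\ g = foldr mul 1 w.

Definition inv_set (S : G -> Prop) : G -> Prop := fun x => S x^-1.

Definition arc2S (L R : G -> Prop) (g h : G) : Prop :=
  exists l r, L l /\ R r /\ h = l^-1 * g * r.

(* g ~ h : weakly connected in 2S(G;L,R) (reflexive-symmetric-transitive
   closure of the arc relation = existence of an undirected walk) *)
Definition wconn (L R : G -> Prop) : G -> G -> Prop :=
  clos_refl_sym_trans G (arc2S L R).

Inductive in_gen (S : G -> Prop) : G -> Prop :=
| gen_base x : S x -> in_gen S x
| gen_one : in_gen S 1
| gen_mul x y : in_gen S x -> in_gen S y -> in_gen S (x * y)
| gen_inv x : in_gen S x -> in_gen S x^-1.

End TwoSided.

(* Main.v *)
From Stdlib Require Import Relation_Operators.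
Require Import Defs.
From HB Require Import structures.
From mathcomp Require Import all_boot.
Set Implicit Arguments. Unset Strict Implicit. Unset Printing Implicit Defensive.
Local Open Scope group_scope.

Section Aux.
Local Notation C := clos_refl_sym_trans.

Lemma arcW (G : groupType) (L R : G -> Prop) l r x :
  L l -> R r -> wconn L R x (l^-1 * x * r).
Proof. by move=> Hl Hr; apply: rst_step; exists l, r. Qed.

Lemma A1 (G : groupType) (L R : G -> Prop) l r x :
  L l -> R r -> wconn L R (l * x) (x * r).
Proof. move=> Hl Hr; have := arcW (l * x) Hl Hr. by rewrite mulgA mulVg mul1g. Qed.

Ltac tr y := apply: (rst_trans _ _ _ y).
Ltac sy := apply: rst_sym.

Lemma Lw (G : groupType) (L R : G -> Prop) (r0 : G) l x y : R r0 -> L l ->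
  wconn L R x y -> wconn L R (l * x) (l * y).
Proof.
move=> Hr0 Hl; elim => {x y} [x y [l' [r' [Hl' [Hr' ->]]]] | x | x y _ IH | x y z _ IH1 _ IH2].
- tr (x * r'); first exact: A1.
  tr (l'^-1 * x * r' * r0); last by sy; apply: A1.
  by rewrite -(mulgA l'^-1 x r'); apply: arcW.
- exact: rst_refl.
- by sy.
- by tr (l * y).
Qed.

Lemma Rw (G : groupType) (L R : G -> Prop) (l0 : G) r x y : L l0 -> R r ->
  wconn L R x y -> wconn L R (x * r) (y * r).
Proof.
move=> Hl0 Hr; elim => {x y} [x y [l' [r' [Hl' [Hr' ->]]]] | x | x y _ IH | x y z _ IH1 _ IH2].
- tr (l0 * x); first by sy; apply: A1.
  tr (x * r'); first exact: A1.
  by rewrite -(mulgA l'^-1 x r'); apply: arcW.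
- exact: rst_refl.
- by sy.
- by tr (y * r).
Qed.

Lemma Li (G : groupType) (L R : G -> Prop) (r0 : G) l x y : R r0 -> L l ->
  wconn L R x y -> wconn L R (l^-1 * x) (l^-1 * y).
Proof.
move=> Hr0 Hl; elim => {x y} [x y [l' [r' [Hl' [Hr' ->]]]] | x | x y _ IH | x y z _ IH1 _ IH2].
- tr (x * r0^-1).
    by sy; have := arcW (x * r0^-1) Hl Hr0; rewrite mulgA mulgVK.
  tr (l'^-1 * x).
    by have := arcW (x * r0^-1) Hl' Hr0; rewrite mulgA mulgVK.
  by rewrite mulgA; apply: arcW.
- exact: rst_refl.
- by sy.
- by tr (l^-1 * y).
Qed.

Lemma Ri (G : groupType) (L R : G -> Prop) (l0 : G) r x y : L l0 -> R r ->
  wconn L R x y -> wconn L R (x * r^-1) (y * r^-1).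
Proof.
move=> Hl0 Hr; elim => {x y} [x y [l' [r' [Hl' [Hr' ->]]]] | x | x y _ IH | x y z _ IH1 _ IH2].
- tr (l'^-1 * x).
    by have := arcW (x * r^-1) Hl' Hr; rewrite !mulgA mulgVK.
  tr (l0^-1 * (l'^-1 * x) * r'); first exact: arcW.
  sy; have := arcW (l'^-1 * x * r' * r^-1) Hl0 Hr.
  by rewrite !mulgA mulgVK.
- exact: rst_refl.
- by sy.
- by tr (y * r^-1).
Qed.

Definition fr (G : groupType) (r0 : G) n x := iter n (fun y => y * r0) x.

Lemma fr_mul (G : groupType) (r0 : G) n a x : fr r0 n (a * x) = a * fr r0 n x.
Proof. by elim: n => //= n IH; rewrite /fr /= -/(fr r0 n _) IH mulgA. Qed.

Lemma strip (G : groupType) (L R : G -> Prop) (l0 r0 : G) w x : L l0 -> R r0 ->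
  (forall y, y \in w -> L y) ->
  wconn L R (foldr mul 1 w * x) (fr r0 (size w) x).
Proof.
move=> Hl0 Hr0; elim: w => [|l w IH] Hw /=.
  by rewrite mul1g; apply: rst_refl.
tr (foldr mul 1 w * x * r0).
  by rewrite -mulgA; apply: A1 => //; apply: Hw; rewrite inE eqxx.
apply: (Rw Hl0 Hr0); apply: IH => y Hy; apply: Hw; by rewrite inE Hy orbT.
Qed.

Lemma cancel_fr (G : groupType) (L R : G -> Prop) (l0 r0 : G) n x y : L l0 -> R r0 ->
  wconn L R (fr r0 n x) (fr r0 n y) -> wconn L R x y.
Proof.
move=> Hl0 Hr0; elim: n => //= n IH H; apply: IH.
by have := Ri Hl0 Hr0 H; rewrite !mulgK.
Qed.

Lemma foldr_catg (G : groupType) (a b : seq G) :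
  foldr mul 1 (a ++ b) = foldr mul 1 a * foldr mul 1 b.
Proof. by elim: a => [|x a IH] /=; rewrite ?mul1g // IH mulgA. Qed.

Lemma foldr_revinv (G : groupType) (w : seq G) :
  foldr mul 1 (rev (map inv w)) = (foldr mul 1 w)^-1.
Proof.
elim: w => [|x w IH] /=; first by rewrite invg1.
by rewrite rev_cons -cats1 foldr_catg IH /= mulg1 invgM.
Qed.

Lemma LwW (G : groupType) (L R : G -> Prop) (r0 : G) w x y : R r0 ->
  (forall z, z \in w -> L z) ->
  wconn L R x y -> wconn L R (foldr mul 1 w * x) (foldr mul 1 w * y).
Proof.
move=> Hr0; elim: w => [|l w IH] Hw H /=; first by rewrite !mul1g.
rewrite -!mulgA; apply: (Lw Hr0); first by apply: Hw; rewrite inE eqxx.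
by apply: IH => // z Hz; apply: Hw; by rewrite inE Hz orbT.
Qed.

Lemma LiW (G : groupType) (L R : G -> Prop) (r0 : G) w x y : R r0 ->
  (forall z, z \in w -> L z) ->
  wconn L R x y -> wconn L R ((foldr mul 1 w)^-1 * x) ((foldr mul 1 w)^-1 * y).
Proof.
move=> Hr0; elim: w x y => [|l w IH] x y Hw H /=; first by rewrite invg1 !mul1g.
rewrite invgM -!mulgA; apply: IH; first by move=> z Hz; apply: Hw; by rewrite inE Hz orbT.
by apply: (Li Hr0) => //; apply: Hw; rewrite inE eqxx.
Qed.

Lemma GenL (G : groupType) (L R : G -> Prop) (r0 : G) a : R r0 -> in_gen L a ->
  (forall x y, wconn L R x y -> wconn L R (a * x) (a * y)) /\
  (forall x y, wconn L R x y -> wconn L R (a^-1 * x) (a^-1 * y)).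
Proof.
move=> Hr0; elim => {a} [x Hx | | x y _ [I1 I2] _ [J1 J2] | x _ [I1 I2]].
- by split=> u v H; [apply: (Lw Hr0) | apply: (Li Hr0)].
- by split=> u v H; rewrite ?invg1 !mul1g.
- split=> u v H; first by rewrite -!mulgA; apply: I1; apply: J1.
  by rewrite invgM -!mulgA; apply: J2; apply: I2.
- by split=> u v H; rewrite ?invgK; [apply: I2 | apply: I1].
Qed.

Lemma GenR (G : groupType) (L R : G -> Prop) (l0 : G) a : L l0 -> in_gen R a ->
  (forall x y, wconn L R x y -> wconn L R (x * a) (y * a)) /\
  (forall x y, wconn L R x y -> wconn L R (x * a^-1) (y * a^-1)).
Proof.
move=> Hl0; elim => {a} [x Hx | | x y _ [I1 I2] _ [J1 J2] | x _ [I1 I2]].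
- by split=> u v H; [apply: (Rw Hl0) | apply: (Ri Hl0)].
- by split=> u v H; rewrite ?invg1 !mulg1.
- split=> u v H; first by rewrite !mulgA; apply: J1; apply: I1.
  by rewrite invgM !mulgA; apply: I2; apply: J2.
- by split=> u v H; rewrite ?invgK; [apply: I2 | apply: I1].
Qed.

Lemma H1 (G : groupType) (L R : G -> Prop) (l0 r0 s : G) m n u v : L l0 -> R r0 ->
  n < m -> is_word L m u -> is_word L n v -> wconn L R (u * s) (v * s) ->
  exists w, is_word L (m - n) w /\ wconn L R (w * s) s.
Proof.
move=> Hl0 Hr0 ltnm [wu [Su [Mu ->]]] [wv [Sv [Mv ->]]] H.
exists (foldr mul 1 (drop n wu)); split.
  exists (drop n wu); split; first by rewrite size_drop Su.
  by split=> // x /mem_drop; apply: Mu.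
apply: (cancel_fr (n := n) Hl0 Hr0).
have E1 := strip s Hl0 Hr0 Mv; rewrite Sv in E1.
have Mt : forall y, y \in take n wu -> L y by move=> y /mem_take; apply: Mu.
have E2 := strip (foldr mul 1 (drop n wu) * s) Hl0 Hr0 Mt.
rewrite size_takel in E2; last by rewrite Su ltnW.
tr (foldr mul 1 (take n wu) * (foldr mul 1 (drop n wu) * s)); first by sy.
tr (foldr mul 1 wv * s) => //.
by rewrite mulgA -foldr_catg cat_take_drop.
Qed.

End Aux.

Theorem mainTheorem15 (G : groupType) (L R : G -> Prop)
  (hL : exists l, L l) (hR : exists r, R r) (s : G) :
  (* (1) *)
  ((exists (m n : nat) (u v : G), m <> n /\ is_word L m u /\ is_word L n v /\
       wconn L R (u * s)%g (v * s)%g)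
   <->
   (exists (k : nat) (w : G), 0 < k /\ is_word L k w /\ wconn L R (w * s)%g s))
  /\
  (forall (m n : nat) (u v : G), m <> n -> is_word L m u -> is_word L n v ->
     wconn L R (u * s)%g (v * s)%g ->
     exists w : G, is_word L (maxn m n - minn m n) w /\ wconn L R (w * s)%g s)
  /\
  (* (2) *)
  (forall n : nat, 1 <= n ->
     ((exists w : G, is_word L n w /\ wconn L R (w * s)%g s) <->
      (exists w : G, is_word (inv_set L) n w /\ wconn L R (w * s)%g s)))
  /\
  (* (3) *)
  (forall (g : G) (k : nat),
     (exists a b : G, in_gen L a /\ in_gen R b /\ g = (a * s * b)%g) ->
     1 <= k ->
     ((exists w : G, is_word L k w /\ wconn L R (w * g)%g g) <->
      (exists w' : G, is_word L k w' /\ wconn L R (w' * s)%g s))).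
Proof.
have [l0 Hl0] := hL; have [r0 Hr0] := hR.
have P1b : forall (m n : nat) (u v : G), m <> n -> is_word L m u -> is_word L n v ->
     wconn L R (u * s)%g (v * s)%g ->
     exists w : G, is_word L (maxn m n - minn m n) w /\ wconn L R (w * s)%g s.
  move=> m n u v Hmn Hu Hv H.
  have [ltnm|ltmn|eq] := ltngtP n m.
  -     exact: (H1 Hl0 Hr0 ltnm Hu Hv H).
  -     exact: (H1 Hl0 Hr0 ltmn Hv Hu (rst_sym _ _ _ _ H)).
  - by case: Hmn.
split; [split|split; [exact: P1b|split]].
- move=> [m [n [u [v [Hmn [Hu [Hv H]]]]]]].
  have [w [Hw Hws]] := P1b m n u v Hmn Hu Hv H.
  exists (maxn m n - minn m n), w; split => //.
  rewrite subn_gt0; case: (ltngtP m n) Hmn => h Hmn //.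
- move=> [k [w [Hk [Hw H]]]].
  exists k, 0, w, 1; split; first by move=> e; rewrite e in Hk.
  split => //; split; first by exists [::].
  by rewrite mul1g.
- move=> n _; split.
  + move=> [w [[W [SW [MW ->]]] H]].
    exists (foldr mul 1 (rev (map inv W))); split.
      exists (rev (map inv W)); split; first by rewrite size_rev size_map.
      split => // x; rewrite mem_rev => /mapP [y Hy ->].
      by rewrite /inv_set invgK; apply: MW.
    rewrite foldr_revinv; apply: rst_sym.
    by have := LiW Hr0 MW H; rewrite mulKg.
  + move=> [w [[W [SW [MW ->]]] H]].
    have MW' : forall z, z \in rev (map inv W) -> L z.
      move=> x; rewrite mem_rev => /mapP [y Hy ->].
      by have := MW y Hy.
    exists (foldr mul 1 (rev (map inv W))); split.
      by exists (rev (map inv W)); split; first by rewrite size_rev size_map.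
    have := LwW Hr0 MW' H; rewrite foldr_revinv mulgA mulVg mul1g => H'.
    by apply: rst_sym.
- move=> g k [a [b [Ha [Hb ->]]]] _.
  have [GL1 GL2] := GenL Hr0 Ha; have [GR1 GR2] := GenR Hl0 Hb.
  have key : forall w, is_word L k w -> wconn L R (w * (a * s)) (a * (w * s)).
    move=> w [W [SW [MW ->]]].
    apply: (rst_trans _ _ _ (fr r0 k (a * s))).
      by rewrite -SW; apply: (strip _ Hl0 Hr0).
    rewrite fr_mul; apply: GL1; apply: rst_sym.
    by rewrite -SW; apply: (strip _ Hl0 Hr0).
  split.
  + move=> [w [Hw H]]; exists w; split => //.
    have H2 : wconn L R (w * (a * s)) (a * s).
      by have := GR2 _ _ H; rewrite !mulgA !mulgK.
    have H3 : wconn L R (a * (w * s)) (a * s).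
      exact: (rst_trans _ _ _ _ _ (rst_sym _ _ _ _ (key w Hw)) H2).
    by have := GL2 _ _ H3; rewrite !mulKg.
  + move=> [w [Hw H]]; exists w; split => //.
    have H3 : wconn L R (a * (w * s)) (a * s) by apply: GL1.
    have H2 := rst_trans _ _ _ _ _ (key w Hw) H3.
    by have := GR1 _ _ H2; rewrite !mulgA.
Qed.
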